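(* Let $m/n\in(0,1/2)$ with $m>1$, let $u/v=\mathrm{LFP}(m/n)$, and let $k\in[0,m-2]\setminus R_{m/n}$. Then $k\in\mathcal A_{m/n}$ if and only if $\psi_{m/n}(k)\in\mathcal A_{u/v}$.
   Context: Rationals in lowest terms; $\mathrm{LFP}(h/k)$ is the element immediately preceding $h/k$ in the increasing list of rationals in $[0,1/2]$ with denominator at most $k$. $+_n$ is addition mod $n$ on $\mathbb Z_n=\{0,\dots,n-1\}$; $\mathcal O_{m/n}[r,s]=\{r+_njm\colon 0\le j\le K\}$ with $K\ge0$ least such that $r+_nKm=s$; $[a,b]=\{a,\dots,b\}$. An integer $k\in[0,m-1]$ is $m/n$-admissible if $[k+1,m-1]\cap\mathcal O_{m/n}[k,0]=\emptyset$; $\mathcal A_{m/n}$ is the set of $m/n$-admissible integers (and similarly $\mathcal A_{u/v}\subseteq[0,u-1]$). $R_{m/n}=\mathcal O_{m/n}[m,n-1]$, and $\psi_{m/n}\colon\mathbb Z_n\to\mathbb Z_v$ is $\psi_{m/n}(k)=k-\#(R_{m/n}\cap[0,k])$. *)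

(* Defs.v *)
From mathcomp Require Import all_boot.
Set Implicit Arguments. Unset Strict Implicit. Unset Printing Implicit Defensive.

Definition addmod (n r x : nat) : nat := (r + x) %% n.

Definition orbpt (m n r j : nat) : nat := addmod n r (j * m).

(* K = least K >= 0 with r +_n K m = s (searched in [0, n-1]; when
   gcd(m,n) = 1 and r, s are in Z_n such a K exists and is < n) *)
Definition orbK (m n r s : nat) : nat :=
  find (fun j => orbpt m n r j == s) (iota 0 n).

Definition orbit (m n r s : nat) : seq nat :=
  [seq orbpt m n r j | j <- iota 0 (orbK m n r s).+1].

Definition admissible (m n k : nat) : bool :=
  (k < m) && all (fun x => ~~ (k < x < m)) (orbit m n k 0).

Definition Rset (m n : nat) : seq nat := orbit m n m n.-1.

Definition psi (m n k : nat) : nat :=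
  k - size [seq x <- undup (Rset m n) | x <= k].

(* u/v = LFP(h/k): u/v is a rational in lowest terms in [0,1/2] with
   denominator at most k, u/v < h/k, and no rational p/q in [0,1/2] with
   q <= k lies strictly between u/v and h/k.  (Fractions compared by
   cross-multiplication.) *)
Definition is_LFP (h k u v : nat) : Prop :=
  [/\ 0 < v /\ v <= k, coprime u v, 2 * u <= v, u * k < h * v &
      forall p q : nat, 0 < q -> q <= k -> 2 * p <= q ->
        ~ (u * q < p * v /\ p * k < h * q)].

(* Main.v *)
Require Import Defs.
From mathcomp Require Import all_boot zify.

Lemma farey (m n u v : nat) :
  coprime m n -> 2 * m < n -> 1 < m -> is_LFP m n u v -> m * v = n * u + 1.
Proof.
move=> cmn h2 h1 [[v0 vn] cuv h2u hlt hno].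
have n0 : 0 < n by lia.
have [a an] := Bezoutl m n0.
rewrite gcdnC (eqP cmn) => /dvdnP [c hc].
have cm : c <= m.
  have h : a * m < n * m by rewrite ltn_pmul2r; lia.
  rewrite -(leq_pmul2r n0); lia.
pose q := n - a; pose p := m - c.
have hq : m * q = n * p + 1.
  have : a * m <= n * m by rewrite leq_pmul2r; lia.
  have : n * c <= n * m by rewrite leq_mul2l cm orbT.
  rewrite /q /p mulnBr mulnBr; lia.
have q0 : 0 < q by rewrite /q; lia.
have qn : q <= n by rewrite /q; lia.
have hp2 : 2 * p < q.
  rewrite -(ltn_pmul2l n0).
  have : n * q > 2 * m * q by rewrite ltn_pmul2r.
  lia.
have hpv : p * v <= u * q.
  rewrite leqNgt; apply/negP => H; apply: (hno p q q0 qn (ltnW hp2)); split => //; lia.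
have id : q * (m * v - n * u) + n * (u * q - p * v) = v.
  have [d hd] : exists d, m * v = n * u + d by exists (m * v - n * u); lia.
  have [e he] : exists e, u * q = p * v + e by exists (u * q - p * v); lia.
  have k1 : q * (m * v) = q * (n * u + d) by rewrite hd.
  have k2 : n * (u * q) = n * (p * v + e) by rewrite he.
  have k3 : v * (m * q) = v * (n * p + 1) by rewrite hq.
  have -> : m * v - n * u = d by lia.
  have -> : u * q - p * v = e by lia.
  lia.
have e0 : u * q = p * v.
  apply/eqP; rewrite eqn_leq hpv andbT leqNgt; apply/negP => H.
  have : n * (u * q - p * v) >= n by apply: leq_pmulr; rewrite subn_gt0; lia.
  have : q * (m * v - n * u) >= q by apply: leq_pmulr; rewrite subn_gt0; lia.
  lia.
have hvd : v %| q.
  have : v %| u * q by rewrite e0 dvdn_mull.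
  by rewrite Gauss_dvdr // coprime_sym.
have := dvdn_leq q0 hvd => vq.
move: id; rewrite e0 subnn muln0 addn0 => id.
have d1 : m * v - n * u <= 1.
  rewrite -(leq_pmul2l q0) id muln1 //.
lia.
Qed.

Definition gg (n v a : nat) := n * a %/ v.

Lemma gg_lt n v a : 0 < n -> 0 < v -> a < v -> gg n v a < n.
Proof. move=> n0 v0 av; rewrite /gg ltn_divLR // ltn_mul2l n0 //. Qed.

Lemma gg_S n v a : 0 < v -> v <= n -> gg n v a < gg n v a.+1.
Proof.
move=> v0 vn; rewrite /gg.
have : (1 * v + n * a) %/ v <= n * a.+1 %/ v by apply: leq_div2r; lia.
rewrite divnMDl //; lia.
Qed.

Lemma gg_mono n v a b : 0 < v -> v <= n -> a < b -> gg n v a < gg n v b.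
Proof.
move=> v0 vn; elim: b => // b IH; rewrite ltnS leq_eqVlt => /orP [/eqP->|h].
  exact: gg_S.
have := IH h; have := gg_S n v b v0 vn. lia.
Qed.

Lemma gg_ltE n v a b : 0 < v -> v <= n -> (gg n v a < gg n v b) = (a < b).
Proof.
move=> v0 vn.
case: (ltnP a b) => [/(gg_mono _ _ _ _ v0 vn) //|ba].
apply/negbTE; rewrite -leqNgt.
case: (ltngtP b a) => [/(gg_mono _ _ _ _ v0 vn)/ltnW //| //|->//].
by move=> h; move: ba; rewrite leqNgt h.
Qed.

Lemma gg_leE n v a b : 0 < v -> v <= n -> (gg n v a <= gg n v b) = (a <= b).
Proof. move=> v0 vn; by rewrite leqNgt gg_ltE // -leqNgt. Qed.

Lemma gg0 n v : gg n v 0 = 0.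
Proof. by rewrite /gg muln0 div0n. Qed.

Lemma gg_u n m u v : 0 < v -> m * v = n * u + 1 -> gg n v u = m.-1.
Proof.
move=> v0 H; rewrite /gg.
case: m H => [|m'] H; first lia.
have -> : n * u = m' * v + v.-1 by rewrite mulSn in H; lia.
rewrite divnMDl // divn_small; lia.
Qed.

Lemma nodvd n m u v b : m * v = n * u + 1 -> 0 < b -> b < v -> ~~ (v %| n * b).
Proof.
move=> H b0 bv; apply/negP => hd.
have h1 : v %| n * b * u by rewrite dvdn_mulr.
have h2 : v %| n * b * u + b.
  have -> : n * b * u + b = b * m * v by rewrite -[b * m * v]mulnA H; lia.
  by rewrite dvdn_mull.
rewrite dvdn_addr // in h2.
have := dvdn_leq b0 h2; lia.
Qed.

Lemma gg_step n m u v b : 0 < v -> v < n -> u < v -> m * v = n * u + 1 ->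
  0 < b -> b < v -> (gg n v b + m) %% n = gg n v ((b + u) %% v).
Proof.
move=> v0 vn uv H b0 bv.
have e := divn_eq (n * b) v.
set q := n * b %/ v in e *; set r := n * b %% v in e *.
have r0 : 0 < r.
  rewrite lt0n; apply/negP => /eqP hr.
  have := nodvd _ _ _ _ _ H b0 bv; rewrite /dvdn -/r hr //.
have rv : r < v by rewrite ltn_pmod.
have hq : gg n v b = q by [].
clearbody q r.
have E : n * (b + u) = (q + m) * v + r.-1 by rewrite mulnDr mulnDl; lia.
have G : n * (b + u) %/ v = q + m by rewrite E divnMDl // divn_small ?addn0 //; lia.
have n0 : 0 < n by lia.
case: (ltnP (b + u) v) => h.
  rewrite (modn_small h) hq /gg G modn_small //.
  by rewrite -G; apply: (gg_lt n v (b + u)).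
have -> : (b + u) %% v = b + u - v.
  by rewrite -{1}(subnK h) modnDr modn_small //; lia.
have F : n * (b + u) = n * v + n * (b + u - v) by rewrite -mulnDr subnKC.
have G2 : gg n v (b + u - v) = q + m - n.
  by move: G; rewrite F divnMDl // /gg => <-; rewrite addKn.
have qmn : n <= q + m.
  rewrite -G; have : n * v %/ v <= n * (b + u) %/ v by apply: leq_div2r; rewrite leq_mul2l h orbT.
  by rewrite mulnK.
have lt2 : q + m - n < n by rewrite -G2; apply: gg_lt => //; lia.
by rewrite hq G2 -{1}(subnK qmn) modnDr modn_small.
Qed.

Lemma findI (P : pred nat) N j : j < N -> P j -> (forall i, i < j -> ~~ P i) ->
  find P (iota 0 N) = j.
Proof.
move=> jN Pj hb.
have hs : has P (iota 0 N) by apply/hasP; exists j => //; rewrite mem_iota.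
have := hs; rewrite has_find size_iota => fN.
have := nth_find 0 hs; rewrite nth_iota // add0n => Pf.
case: (ltngtP (find P (iota 0 N)) j) => // h.
  by have := hb _ h; rewrite Pf.
have := before_find 0 h; rewrite nth_iota // add0n Pj //.
Qed.

Lemma orbS m n r j : orbpt m n r j.+1 = (orbpt m n r j + m) %% n.
Proof. by rewrite /orbpt /addmod mulSnr addnA modnDml. Qed.

Lemma orb0 m n r : orbpt m n r 0 = r %% n.
Proof. by rewrite /orbpt /addmod mul0n addn0. Qed.

Lemma idx n m u v x t : 0 < n -> m * v = n * u + 1 -> x < n -> t < n ->
  ((t * m) %% n == x) = ((x * v) %% n == t).
Proof.
move=> n0 H xn tn; apply/eqP/eqP => [<-|<-].
  rewrite modnMml -mulnA H.
  have -> : t * (n * u + 1) = t * u * n + t by rewrite mulnDr muln1; lia.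
  by rewrite modnMDl modn_small.
rewrite modnMml -mulnA [v * m]mulnC H.
have -> : x * (n * u + 1) = x * u * n + x by rewrite mulnDr muln1; lia.
by rewrite modnMDl modn_small.
Qed.

Lemma nm1v n v : 0 < v -> v < n -> (n.-1 * v) %% n = n - v.
Proof.
move=> v0 vn.
have -> : n.-1 * v = v.-1 * n + (n - v).
  case: n vn => [|n'] vn //; case: v v0 vn => [|v'] //= _ vn.
  rewrite !mulnS; lia.
rewrite modnMDl modn_small //; lia.
Qed.

Lemma orbR_P n m u v j : 1 < n -> 0 < v -> v < n -> m * v = n * u + 1 -> j < n ->
  (orbpt m n m j == n.-1) = (j.+1 == n - v).
Proof.
move=> n1 v0 vn H jn.
have -> : orbpt m n m j = (j.+1 * m) %% n by rewrite /orbpt /addmod mulSn.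
case: (ltngtP j.+1 n) => h; last first.
- rewrite h mulnC modnMl; apply/idP/idP => /eqP; lia.
- lia.
rewrite (@idx n m u v n.-1 j.+1 _ H _ h); try lia.
by rewrite nm1v // eq_sym.
Qed.

Lemma orbK_R n m u v : 1 < n -> 0 < v -> v < n -> m * v = n * u + 1 ->
  Defs.orbK m n m n.-1 = n - v - 1.
Proof.
move=> n1 v0 vn H; apply: findI; first lia.
  by rewrite /= (orbR_P _ _ _ _ _ n1 v0 vn H) //; lia.
by move=> i hi; rewrite /= (orbR_P _ _ _ _ _ n1 v0 vn H); lia.
Qed.

Lemma Rset_mem n m u v x : 1 < n -> 0 < v -> v < n -> m * v = n * u + 1 -> x < n ->
  (x \in Rset m n) = (0 < (x * v) %% n <= n - v).
Proof.
move=> n1 v0 vn H xn.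
have n0 : 0 < n by lia.
rewrite /Rset /Defs.orbit (orbK_R _ _ _ _ n1 v0 vn H).
have -> : (n - v - 1).+1 = n - v by lia.
have oS : forall j, orbpt m n m j = (j.+1 * m) %% n.
  by move=> j; rewrite /orbpt /addmod mulSn.
apply/mapP/idP.
- case=> j; rewrite mem_iota add0n => /andP[_ jl] ->.
  rewrite oS.
  have : ((j.+1 * m) %% n == (j.+1 * m) %% n) by [].
  rewrite (@idx n m u v _ j.+1 n0 H) ?ltn_pmod //; last lia.
  move/eqP ->; lia.
- move=> /andP[t0 tl]; exists ((x * v) %% n).-1.
    rewrite mem_iota; lia.
  rewrite oS prednK //.
  apply/esym/eqP; rewrite (@idx n m u v x _ n0 H xn) ?ltn_pmod //.
Qed.

Lemma NR1 n m u v b : 1 < n -> 0 < v -> v < n -> m * v = n * u + 1 -> b < v ->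
  gg n v b \notin Rset m n.
Proof.
move=> n1 v0 vn H bv.
rewrite (Rset_mem _ _ _ _ _ n1 v0 vn H); last by apply: gg_lt => //; lia.
case: b bv => [|b'] bv; first by rewrite gg0 mul0n mod0n.
have e := divn_eq (n * b'.+1) v.
have hq : gg n v b'.+1 = n * b'.+1 %/ v by [].
move: hq e; set q := n * b'.+1 %/ v; set r := n * b'.+1 %% v => hq e.
have r0 : 0 < r.
  rewrite lt0n; apply/negP => /eqP hr.
  by have := nodvd _ _ _ _ _ H (ltn0Sn b') bv; rewrite /dvdn -/r hr.
have rv : r < v by rewrite ltn_pmod.
clearbody q r; rewrite hq.
have -> : q * v = b' * n + (n - r) by move: e; rewrite mulnS; lia.
rewrite modnMDl modn_small; lia.
Qed.

Lemma NR2 n m u v x : 1 < n -> 0 < v -> v < n -> m * v = n * u + 1 -> x < n ->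
  x \notin Rset m n -> exists2 b, b < v & x = gg n v b.
Proof.
move=> n1 v0 vn H xn.
have n0 : 0 < n by lia.
rewrite (Rset_mem _ _ _ _ _ n1 v0 vn H xn).
have e := divn_eq (x * v) n.
move: e; set c := x * v %/ n; set t := x * v %% n => e.
have tn : t < n by rewrite ltn_pmod.
clearbody c t.
case: (posnP t) => [t0 _|t0].
  exists 0 => //; rewrite gg0.
  have h1 : n %| x * v * m by rewrite e t0 addn0 -mulnA [n * m]mulnC mulnA dvdn_mull.
  have h2 : x * v * m = x * u * n + x by rewrite -mulnA [v * m]mulnC H mulnDr muln1; lia.
  rewrite h2 dvdn_addr ?dvdn_mull // in h1.
  by apply/eqP; rewrite -(modn_small xn); apply/eqP; apply/eqP; rewrite -/(dvdn n x) h1.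
rewrite /= -ltnNge => tl.
exists c.+1.
  have h3 : x.+1 * v <= n * v by rewrite leq_mul2r xn orbT.
  rewrite -(ltn_pmul2l n0); move: h3; rewrite mulSn mulnS; lia.
rewrite /gg.
have -> : n * c.+1 = x * v + (n - t) by rewrite mulnS; lia.
rewrite divnMDl // divn_small ?addn0 //; lia.
Qed.

Lemma K_facts n m u v a : 0 < v -> a < v -> m * v = n * u + 1 ->
  [/\ Defs.orbK u v a 0 < v, orbpt u v a (Defs.orbK u v a 0) = 0 &
      forall i, i < Defs.orbK u v a 0 -> orbpt u v a i != 0].
Proof.
move=> v0 av H.
set P := (fun j => orbpt u v a j == 0).
have hs : has P (iota 0 v).
  apply/hasP; exists ((a * n) %% v); first by rewrite mem_iota ltn_pmod.
  rewrite /P /orbpt /addmod -modnDmr modnMml modnDmr.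
  have -> : a + a * n * u = a * m * v by rewrite -[a * m * v]mulnA H; lia.
  by rewrite modnMl.
have K1 : Defs.orbK u v a 0 < v by have := hs; rewrite has_find size_iota.
split => //.
  by have := nth_find 0 hs; rewrite nth_iota // add0n => /eqP.
by move=> i hi; have := before_find 0 hi; rewrite nth_iota ?add0n ?(ltn_trans hi) // => ->.
Qed.

Lemma orb_corr n m u v a j : 0 < v -> v < n -> u < v -> m * v = n * u + 1 -> a < v ->
  j <= Defs.orbK u v a 0 -> orbpt m n (gg n v a) j = gg n v (orbpt u v a j).
Proof.
move=> v0 vn uv H av.
have [K1 K2 K3] := K_facts _ _ _ _ _ v0 av H.
elim: j => [|j IH] hj.
  rewrite !orb0 (modn_small av) modn_small //; apply: gg_lt => //; lia.
rewrite orbS IH ?(ltnW hj) // orbS (gg_step n m u v) //.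
  by rewrite lt0n K3.
by rewrite ltn_pmod.
Qed.

Lemma orbit_corr n m u v a : 0 < v -> v < n -> u < v -> m * v = n * u + 1 -> a < v ->
  Defs.orbit m n (gg n v a) 0 = map (gg n v) (Defs.orbit u v a 0).
Proof.
move=> v0 vn uv H av.
have [K1 K2 K3] := K_facts _ _ _ _ _ v0 av H.
have n0 : 0 < n by lia.
have eK : Defs.orbK m n (gg n v a) 0 = Defs.orbK u v a 0.
  apply: findI; first lia.
    by rewrite /= (orb_corr n m u v a) // K2 gg0.
  move=> i hi; rewrite /= (orb_corr n m u v a) ?(ltnW hi) //.
  move: (K3 _ hi); set b := orbpt u v a i => hb.
  have b0 : 0 < b by rewrite lt0n.
  have := gg_mono n v 0 b v0 (ltnW vn) b0; rewrite gg0 => h.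
  by rewrite /= -lt0n.
rewrite /Defs.orbit eK -map_comp; apply/eq_in_map => j; rewrite mem_iota /= => hj.
by rewrite (orb_corr n m u v a).
Qed.

Lemma u_notin n m u v a : 0 < v -> u < v -> a < v -> a != u -> m * v = n * u + 1 ->
  u \notin Defs.orbit u v a 0.
Proof.
move=> v0 uv av au H; apply/mapP => [[j]]; rewrite mem_iota /= => hj.
have [K1 K2 K3] := K_facts _ _ _ _ _ v0 av H.
case: j hj => [|j] hj.
  by rewrite orb0 modn_small // => e; move: au; rewrite e eqxx.
rewrite orbS => e.
have hK : j < Defs.orbK u v a 0 by [].
have := K3 _ hK; have : orbpt u v a j < v by rewrite ltn_pmod.
move: e; set b := orbpt u v a j => e bv b0.
case: (ltnP (b + u) v) => h.
  by move: e; rewrite modn_small //; move: b0; rewrite -lt0n; lia.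
move: e; rewrite -{1}(subnK h) modnDr modn_small; lia.
Qed.

Lemma psi_gg n m u v a : 1 < n -> 0 < v -> v < n -> m * v = n * u + 1 -> a < v ->
  psi m n (gg n v a) = a.
Proof.
move=> n1 v0 vn H av.
have vn' : v <= n by lia.
have kn : gg n v a < n by apply: gg_lt => //; lia.
set k := gg n v a in kn *.
have s1 : size [seq x <- undup (Rset m n) | x <= k] = count (mem (Rset m n)) (iota 0 k.+1).
  rewrite -size_filter; apply: perm_size; apply: uniq_perm.
  - by rewrite filter_uniq // undup_uniq.
  - by rewrite filter_uniq // iota_uniq.
  by move=> x; rewrite !mem_filter mem_undup mem_iota /= ltnS andbC.
have s2 : count (predC (mem (Rset m n))) (iota 0 k.+1) = a.+1.
  rewrite -size_filter -(size_iota 0 a.+1) -(size_map (gg n v)).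
  apply: perm_size; apply: uniq_perm.
  - by rewrite filter_uniq // iota_uniq.
  - rewrite map_inj_uniq ?iota_uniq // => x y /eqP.
    by rewrite eqn_leq !gg_leE // -eqn_leq => /eqP.
  move=> x; apply/idP/idP.
  - rewrite mem_filter mem_iota ltnS => /andP[xR /andP[_ xk]].
    have [b bv ex] := NR2 _ _ _ _ _ n1 v0 vn H (leq_ltn_trans xk kn) xR.
    subst x.
    apply/mapP; exists b => //; rewrite mem_iota add0n ltnS leq0n /= -(gg_leE n v) //.
  - case/mapP => b; rewrite mem_iota add0n ltnS => /andP[_ hb] ->.
    rewrite mem_filter mem_iota add0n ltnS leq0n /k gg_leE // hb andbT.
    rewrite andbT; apply: (NR1 _ _ _ _ _ n1 v0 vn H); lia.
have := count_predC (mem (Rset m n)) (iota 0 k.+1).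
rewrite size_iota s2 /psi s1; lia.
Qed.

Theorem lemma2p19 (m n u v k : nat) :
  coprime m n -> 0 < m -> 2 * m < n -> 1 < m ->
  is_LFP m n u v ->
  k <= m - 2 -> k \notin Rset m n ->
  admissible m n k = admissible u v (psi m n k).
Proof.
move=> cmn m0 h2 h1 L kle kR.
have H := farey _ _ _ _ cmn h2 h1 L.
case: L => [[v0 vn] cuv h2u _ _].
have n1 : 1 < n by lia.
have vn' : v < n.
  rewrite ltn_neqAle vn andbT; apply/eqP => e; subst v.
  have : (m * n) %% n = (n * u + 1) %% n by rewrite H.
  rewrite modnMl mulnC modnMDl modn_small //.
have u0 : 0 < u.
  rewrite lt0n; apply/eqP => e; subst u.
  have : m <= m * v by apply: leq_pmulr.
  lia.
have uv : u < v by lia.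
have kn : k < n by lia.
have [a av ea] := NR2 _ _ _ _ _ n1 v0 vn' H kn kR.
subst k.
rewrite (psi_gg _ _ _ _ _ n1 v0 vn' H av).
have gu := gg_u n m u v v0 H.
have au : a < u by rewrite -(gg_ltE n v) // gu; lia.
have ga : gg n v a < m by rewrite -(gg_ltE n v) in au; lia.
rewrite /admissible (orbit_corr _ _ _ _ _ v0 vn' uv H av) all_map ga au !andTb.
apply: eq_in_all => y hy /=.
have yv : y < v by move: hy => /mapP [j _ ->]; rewrite ltn_pmod.
have yu : y != u.
  apply/eqP => e; subst y.
  by move: hy; rewrite (negbTE (u_notin _ _ _ _ _ v0 uv av (negbT (ltn_eqF au)) H)).
rewrite gg_ltE //.
have -> : (gg n v y < m) = (y < u).
  have -> : (y < u) = (y <= u) by rewrite ltn_neqAle yu.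
  rewrite -(gg_leE n v y u) // gu; by case: (m) m0 => [|m'] // _; rewrite ltnS.
by [].
Qed.
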